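(* Let $\{\rho_\theta\}$ be a two-parameter qubit model satisfying the regularity conditions, with Bloch vectors $\mathbf s_\theta$, and let $W=[w_{ij}]$ be a $2\times 2$ real positive definite matrix. Then \[ C_\theta^H[W]=\min_{\vec\xi\in\mathbb R^2}h_\theta[\vec\xi|W], \] where, for $\vec\xi=(\xi^1,\xi^2)^T$, \[ h_\theta[\vec\xi|W]=\mathrm{Tr}(WG_\theta^{-1})+\langle\boldsymbol\ell_\theta^\perp,Q_\theta^{-1}\boldsymbol\ell_\theta^\perp\rangle(\vec\xi|W\vec\xi)+2\sqrt{\det W}\,\Big|\langle\boldsymbol\ell_\theta^1,F_\theta\boldsymbol\ell_\theta^2\rangle+(1-s_\theta^2)(\vec\gamma_\theta|\vec\xi)\Big|. \]
   Context: Two-parameter qubit model: density matrices $\rho_\theta=\tfrac12(I+\mathbf s_\theta\cdot\boldsymbol\sigma)$ on $\mathbb C^2$, $\theta=(\theta^1,\theta^2)\in\Theta\subset\mathbb R^2$ open, $\boldsymbol\sigma$ the Pauli matrices, with Bloch vector $\mathbf s_\theta\in\mathbb R^3$, $s_\theta=|\mathbf s_\theta|<1$ (regularity: full rank, smooth dependence on $\theta$, $\partial_1\rho_\theta,\partial_2\rho_\theta$ linearly independent, $\partial_i=\partial/\partial\theta^i$). $\langle\mathbf a,\mathbf b\rangle=\sum_i\bar a_ib_i$ on $\mathbb C^3$, $(\vec a|\vec b)=a_1b_1+a_2b_2$ on $\mathbb R^2$. $Q_\theta=\mathbb 1+\frac{|\mathbf s_\theta\rangle\langle\mathbf s_\theta|}{1-s_\theta^2}$,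 so $Q_\theta^{-1}=\mathbb 1-|\mathbf s_\theta\rangle\langle\mathbf s_\theta|$; $F_\theta\mathbf a=\mathbf s_\theta\times\mathbf a$. SLD Bloch vectors $\boldsymbol\ell_{\theta,i}=Q_\theta\partial_i\mathbf s_\theta$; SLD Fisher matrix $G_\theta=[g_{\theta,ij}]$, $g_{\theta,ij}=\langle\partial_i\mathbf s_\theta,Q_\theta\partial_j\mathbf s_\theta\rangle$ (equal to the usual SLD Fisher information $\mathrm{tr}(\rho_\theta\tfrac12\{L_{\theta,i},L_{\theta,j}\})$); SLD dual Bloch vectors $\boldsymbol\ell_\theta^i=\sum_j(G_\theta^{-1})^{ji}\boldsymbol\ell_{\theta,j}$; $\boldsymbol\ell_\theta^\perp=\partial_1\mathbf s_\theta\times\partial_2\mathbf s_\theta$; $\gamma_{\theta,i}=\langle\mathbf s_\theta,\boldsymbol\ell_{\theta,i}\rangle$, $\vec\gamma_\theta=(\gamma_{\theta,1},\gamma_{\theta,2})^T$. Holevo bound: $C_\theta^H[W]=\min_{\vec X}\{\mathrm{Tr}(W\,\mathrm{Re}\,Z_\theta[\vec X])+\mathrm{TrAbs}(W\,\mathrm{Im}\,Z_\theta[\vec X])\}$ over pairs $\vec X=(X^1,X^2)$ of hermitian operators with $\mathrm{tr}(\rho_\theta X^i)=0$, $\mathrm{tr}(\partial_i\rho_\theta X^j)=\delta^j_i$, where $Z_\theta[\vec X]=[\mathrm{tr}(\rho_\theta X^jX^i)]_{i,j}$ and $\mathrm{TrAbs}$ of a diagonalizable matrix is the sum of absolute values of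 its eigenvalues. *)

(* Defs.v *)
From HB Require Import structures.
From mathcomp Require Import all_boot all_order all_algebra.
From mathcomp Require Import all_classical all_reals.
From mathcomp Require Import topology normedtype derive.
From mathcomp Require Import complex.

Set Implicit Arguments.
Unset Strict Implicit.
Unset Printing Implicit Defensive.

Import Order.TTheory GRing.Theory Num.Theory.
Import numFieldNormedType.Exports.
Local Open Scope classical_set_scope.
Local Open Scope ring_scope.

Section QubitDefs.
Variable R : realType.
Local Notation C := R[i].

Definition toC (x : R) : C := (x%:C)%C.

Definition dot n (a b : 'cV[R]_n) : R := \sum_k a k 0 * b k 0.
Definition bnorm n (a : 'cV[R]_n) : R := Num.sqrt (dot a a).
Definition cross (a b : 'cV[R]_3) : 'cV[R]_3 :=
  \col_(k < 3) nth 0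
    [:: a 1 0 * b 2 0 - a 2 0 * b 1 0;
        a 2 0 * b 0 0 - a 0 0 * b 2 0;
        a 0 0 * b 1 0 - a 1 0 * b 0 0] k.

Definition sigmax : 'M[C]_2 := delta_mx 0 1 + delta_mx 1 0.
Definition sigmay : 'M[C]_2 := (- 'i%C) *: delta_mx 0 1 + 'i%C *: delta_mx 1 0.
Definition sigmaz : 'M[C]_2 := delta_mx 0 0 - delta_mx 1 1.
Definition blochop (v : 'cV[R]_3) : 'M[C]_2 :=
  toC (v 0 0) *: sigmax + toC (v 1 0) *: sigmay + toC (v 2 0) *: sigmaz.
Definition rho_of (s : 'cV[R]_3) : 'M[C]_2 := 2^-1 *: (1%:M + blochop s).

Definition dS (s : 'rV[R]_2 -> 'cV[R]_3) (th : 'rV[R]_2) (i : 'I_2) : 'cV[R]_3 :=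
  'D_(delta_mx 0 i) s th.
(* d_i rho_theta = (d_i s_theta . sigma)/2  (derivative of (I + s.sigma)/2) *)
Definition drho (s : 'rV[R]_2 -> 'cV[R]_3) (th : 'rV[R]_2) (i : 'I_2) : 'M[C]_2 :=
  2^-1 *: blochop (dS s th i).

Definition hermitian n (A : 'M[C]_n) : Prop := (map_mx Num.conj A)^T = A.

Definition holevo_feasible (rho : 'M[C]_2) (drh : 'I_2 -> 'M[C]_2)
  (X : 'I_2 -> 'M[C]_2) : Prop :=
  (forall i, hermitian (X i)) /\
  (forall i, \tr (rho *m X i) = 0) /\
  (forall i j, \tr (drh i *m X j) = (i == j)%:R).

Definition Zmat (rho : 'M[C]_2) (X : 'I_2 -> 'M[C]_2) : 'M[C]_2 :=
  \matrix_(i < 2, j < 2) \tr (rho *m X j *m X i).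

Definition ReM (M : 'M[C]_2) : 'M[R]_2 := map_mx (@complex.Re R) M.
Definition ImM (M : 'M[C]_2) : 'M[R]_2 := map_mx (@complex.Im R) M.

(* TrAbs of a 2x2 real matrix: sum of the absolute values of its two
   (complex) eigenvalues, i.e. of the two roots of its characteristic
   polynomial X^2 - tr(M) X + det(M), given by the quadratic formula. *)
Definition TrAbs (M : 'M[R]_2) : R :=
  let Mc := map_mx toC M in
  let t := \tr Mc in
  let r := sqrtC (t ^+ 2 - 4 * \det Mc) in
  complex.Re (`|(t + r) / 2| + `|(t - r) / 2|).

Definition holevo_fun (W : 'M[R]_2) (rho : 'M[C]_2) (X : 'I_2 -> 'M[C]_2) : R :=
  \tr (W *m ReM (Zmat rho X)) + TrAbs (W *m ImM (Zmat rho X)).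

Definition Qmat (s : 'cV[R]_3) : 'M[R]_3 :=
  1%:M + (1 - bnorm s ^+ 2)^-1 *: (s *m s^T).
Definition Fop (s a : 'cV[R]_3) : 'cV[R]_3 := cross s a.

Section SLD.
Variables (s : 'cV[R]_3) (d : 'I_2 -> 'cV[R]_3).
Definition ell_lo (i : 'I_2) : 'cV[R]_3 := Qmat s *m d i.
Definition Gmat : 'M[R]_2 := \matrix_(i < 2, j < 2) dot (d i) (Qmat s *m d j).
Definition ell_up (i : 'I_2) : 'cV[R]_3 :=
  \sum_(j < 2) (invmx Gmat) j i *: ell_lo j.
Definition ell_perp : 'cV[R]_3 := cross (d 0) (d 1).
Definition gammav : 'cV[R]_2 := \col_(i < 2) dot s (ell_lo i).

Definition hfun (W : 'M[R]_2) (xi : 'cV[R]_2) : R :=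
  \tr (W *m invmx Gmat)
  + dot ell_perp (invmx (Qmat s) *m ell_perp) * (xi^T *m W *m xi) 0 0
  + 2 * Num.sqrt (\det W) *
      `| dot (ell_up 0) (Fop s (ell_up 1))
         + (1 - bnorm s ^+ 2) * (gammav^T *m xi) 0 0 |.
End SLD.

Definition posdef (W : 'M[R]_2) : Prop :=
  W^T = W /\ forall x : 'cV[R]_2, x != 0 -> 0 < (x^T *m W *m x) 0 0.

Definition is_min (S : set R) (m : R) : Prop := S m /\ forall y, S y -> m <= y.

End QubitDefs.

(* Main.v *)
Require Import Defs.
From HB Require Import structures.
From mathcomp Require Import all_boot all_order all_algebra.
From mathcomp Require Import all_classical all_reals.
From mathcomp Require Import topology normedtype derive.
From mathcomp Require Import complex.
From mathcomp Require Import ring lra.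
Import Order.TTheory GRing.Theory Num.Theory.
Import numFieldNormedType.Exports.
Local Open Scope classical_set_scope.
Local Open Scope ring_scope.

Set Implicit Arguments.
Unset Strict Implicit.


Lemma sum3 (T : nmodType) (F : 'I_3 -> T) : \sum_(k < 3) F k = F 0 + F 1 + F 2.
Proof. rewrite !big_ord_recr big_ord0 /= add0r. by congr (F _ + F _ + F _); apply/val_inj. Qed.
Lemma sum2 (T : nmodType) (F : 'I_2 -> T) : \sum_(k < 2) F k = F 0 + F 1.
Proof. rewrite !big_ord_recr big_ord0 /= add0r. by congr (F _ + F _); apply/val_inj. Qed.
Lemma det2 (R : comNzRingType) (A : 'M[R]_2) : \det A = A 0 0 * A 1 1 - A 0 1 * A 1 0.
Proof.
rewrite (expand_det_row _ 0) sum2 /cofactor !det_mx11 !mxE /=.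
have -> : lift (0:'I_2) (0:'I_1) = 1 by apply/val_inj.
have -> : lift (1:'I_2) (0:'I_1) = 0 by apply/val_inj.
by rewrite /= expr0 expr1 mul1r mulN1r mulrN.
Qed.
Lemma ord2P (P : 'I_2 -> Prop) : P 0 -> P 1 -> forall i, P i.
Proof. move=> h0 h1 [[|[|//]] Hi]. - by rewrite (_ : Ordinal Hi = 0) //; apply/val_inj. - by rewrite (_ : Ordinal Hi = 1) //; apply/val_inj. Qed.
Lemma ord3P (P : 'I_3 -> Prop) : P 0 -> P 1 -> P 2 -> forall i, P i.
Proof. move=> h0 h1 h2 [[|[|[|//]]] Hi].
- by rewrite (_ : Ordinal Hi = 0) //; apply/val_inj.
- by rewrite (_ : Ordinal Hi = 1) //; apply/val_inj.
- by rewrite (_ : Ordinal Hi = 2) //; apply/val_inj. Qed.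

Section Aux.
Variable R : realType.
Local Notation C := R[i].
Implicit Types (s u v w y : 'cV[R]_3) (k : 'I_3).

Lemma dotE (a b : 'cV[R]_3) : dot a b = a 0 0 * b 0 0 + a 1 0 * b 1 0 + a 2 0 * b 2 0.
Proof. by rewrite /dot sum3. Qed.
Lemma cross0 (a b : 'cV[R]_3) : cross a b 0 0 = a 1 0 * b 2 0 - a 2 0 * b 1 0. Proof. by rewrite !mxE. Qed.
Lemma cross1 (a b : 'cV[R]_3) : cross a b 1 0 = a 2 0 * b 0 0 - a 0 0 * b 2 0. Proof. by rewrite !mxE. Qed.
Lemma cross2 (a b : 'cV[R]_3) : cross a b 2 0 = a 0 0 * b 1 0 - a 1 0 * b 0 0. Proof. by rewrite !mxE. Qed.
Definition crossE := (cross0, cross1, cross2).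

Lemma dot_ge0 (a : 'cV[R]_3) : 0 <= dot a a.
Proof. rewrite dotE; nra. Qed.
Lemma bnorm2 (a : 'cV[R]_3) : bnorm a ^+ 2 = dot a a.
Proof. by rewrite /bnorm sqr_sqrtr // dot_ge0. Qed.

Lemma dotC (a b : 'cV[R]_3) : dot a b = dot b a.
Proof. rewrite !dotE; ring. Qed.

Lemma vecP (a b : 'cV[R]_3) : a 0 0 = b 0 0 -> a 1 0 = b 1 0 -> a 2 0 = b 2 0 -> a = b.
Proof.
move=> h0 h1 h2; apply/matrixP => i j; rewrite (ord1 j).
by elim/ord3P: i.
Qed.

Lemma QmulE s v k : (Qmat s *m v) k 0 = v k 0 + (1 - dot s s)^-1 * dot s v * s k 0.
Proof.
rewrite /Qmat mulmxDl mul1mx -scalemxAl -mulmxA !mxE big_ord1 bnorm2.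
have -> : (s^T *m v) 0 0 = dot s v by rewrite mxE /dot; apply: eq_bigr => i _; rewrite mxE.
by rewrite [s k _ * _]mulrC mulrA.
Qed.

Lemma sTs s : s^T *m s = (dot s s)%:M.
Proof.
apply/matrixP => i j; rewrite (ord1 i) (ord1 j) !mxE /dot /=.
by rewrite mulr1n; apply: eq_bigr => k _; rewrite mxE.
Qed.

Lemma QinvM s : dot s s < 1 -> invmx (Qmat s) = 1%:M - s *m s^T.
Proof.
move=> hs.
have h1 : 1 - dot s s != 0 by rewrite subr_eq0 eq_sym lt_eqF.
have QP : Qmat s *m (1%:M - s *m s^T) = 1%:M.
  rewrite /Qmat bnorm2 mulmxBr mulmx1 mulmxDl mul1mx -!scalemxAl.
  rewrite !mulmxA -(mulmxA s s^T s) sTs mul_mx_scalar -scalemxAl.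
  apply/matrixP => i j; rewrite !mxE; field; exact: h1.
have [uQ _] := mulmx1_unit QP.
by rewrite -[RHS](mulKmx uQ) QP mulmx1.
Qed.

Lemma QinvE s v k : dot s s < 1 ->
  (invmx (Qmat s) *m v) k 0 = v k 0 - dot s v * s k 0.
Proof.
move=> hs; rewrite QinvM // mulmxBl mul1mx -mulmxA !mxE big_ord1.
have -> : (s^T *m v) 0 0 = dot s v by rewrite mxE /dot; apply: eq_bigr => i _; rewrite mxE.
by rewrite mulrC.
Qed.

Definition Qi s u v : R := dot u v - dot s u * dot s v.

Lemma QiC s u v : Qi s u v = Qi s v u.
Proof. by rewrite /Qi dotC [dot s u * _]mulrC. Qed.

Lemma Qi_invQ s u v : dot s s < 1 -> dot u (invmx (Qmat s) *m v) = Qi s u v.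
Proof. move=> hs; rewrite /Qi !dotE !QinvE // !dotE; ring. Qed.

Lemma QiQ s u v : dot s s < 1 -> Qi s u (Qmat s *m v) = dot u v.
Proof.
move=> hs; have h1 : 1 - dot s s != 0 by rewrite subr_eq0 eq_sym lt_eqF.
rewrite /Qi !dotE !QmulE !dotE; move: h1; rewrite dotE => h1. field. exact: h1.
Qed.

Definition mkP (c : R) (v : 'cV[R]_3) : 'M[C]_2 :=
  \matrix_(i < 2, j < 2)
    if i == 0 then (if j == 0 then ((c + v 2 0) +i* 0)%C else (v 0 0 +i* (- v 1 0))%C)
    else (if j == 0 then (v 0 0 +i* v 1 0)%C else ((c - v 2 0) +i* 0)%C).

Lemma mkP00 c v : mkP c v 0 0 = ((c + v 2 0) +i* 0)%C. Proof. by rewrite mxE. Qed.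
Lemma mkP01 c v : mkP c v 0 1 = (v 0 0 +i* (- v 1 0))%C. Proof. by rewrite mxE. Qed.
Lemma mkP10 c v : mkP c v 1 0 = (v 0 0 +i* v 1 0)%C. Proof. by rewrite mxE. Qed.
Lemma mkP11 c v : mkP c v 1 1 = ((c - v 2 0) +i* 0)%C. Proof. by rewrite mxE. Qed.
Definition mkPE := (mkP00, mkP01, mkP10, mkP11).

Lemma trM2 (A B : 'M[C]_2) : \tr (A *m B) = A 0 0 * B 0 0 + A 0 1 * B 1 0 + (A 1 0 * B 0 1 + A 1 1 * B 1 1).
Proof. by rewrite /mxtrace sum2 !mxE !sum2. Qed.
Lemma mulM2 (A B : 'M[C]_2) i j : (A *m B) i j = A i 0 * B 0 j + A i 1 * B 1 j.
Proof. by rewrite mxE sum2. Qed.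

Lemma trP2 a u b v : \tr (mkP a u *m mkP b v) = (2 * (a*b + dot u v))%:C%C.
Proof.
rewrite trM2 !mkPE dotE; simpc. apply/eqP; rewrite eq_complex /=; apply/andP; split; apply/eqP; ring.
Qed.

Lemma trP3 a u b v c w : \tr (mkP a u *m mkP b v *m mkP c w) =
  ((2*(a*b*c + c*dot u v + a*dot v w + b*dot u w)) +i* (2 * dot u (cross v w)))%C.
Proof.
rewrite trM2 !mulM2 !mkPE !dotE !crossE; simpc. apply/eqP; rewrite eq_complex /=; apply/andP; split; apply/eqP; ring.
Qed.

End Aux.
Arguments mkP {R}.
Arguments Qi {R}.


Section B.
Variable R : realType.
Local Notation C := R[i].

Lemma inv2C : (2^-1 : C) = ((2^-1 : R) +i* 0)%C.
Proof. have -> : ((2^-1 : R) +i* 0)%C = real_complex R (2^-1) by []. by rewrite fmorphV rmorph_nat. Qed.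
Lemma oneC : (1 : C) = ((1 : R) +i* 0)%C. Proof. by []. Qed.
Lemma zeroC : (0 : C) = ((0 : R) +i* 0)%C. Proof. by []. Qed.

Lemma rhoE (s : 'cV[R]_3) : rho_of s = mkP (2^-1) (2^-1 *: s).
Proof.
apply/matrixP => i j; rewrite /rho_of /blochop /sigmax /sigmay /sigmaz /toC !mxE.
elim/ord2P: i; elim/ord2P: j; rewrite /= ?mulr1n ?mulr0n inv2C ?oneC ?zeroC; simpc;
 apply/eqP; rewrite eq_complex /=; apply/andP; split; apply/eqP; ring.
Qed.

Lemma drhoE (d : 'cV[R]_3) : 2^-1 *: blochop d = mkP 0 (2^-1 *: d).
Proof.
apply/matrixP => i j; rewrite /blochop /sigmax /sigmay /sigmaz /toC !mxE.
elim/ord2P: i; elim/ord2P: j; rewrite /= ?mulr1n ?mulr0n inv2C ?oneC ?zeroC; simpc;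
 apply/eqP; rewrite eq_complex /=; apply/andP; split; apply/eqP; ring.
Qed.
Lemma conjE (z : C) : Num.conj z = conjc z. Proof. by []. Qed.

Lemma herm_mkP (c : R) (v : 'cV[R]_3) : Defs.hermitian (mkP c v).
Proof.
apply/matrixP => i j; rewrite !mxE.
elim/ord2P: i; elim/ord2P: j; rewrite /= conjE /conjc; apply/eqP; rewrite eq_complex /=; apply/andP; split; apply/eqP; ring.
Qed.

Definition blv (X : 'M[C]_2) : 'cV[R]_3 :=
  \col_(k < 3) [:: complex.Re (X 0 1); - complex.Im (X 0 1); complex.Re (X 0 0 - X 1 1) / 2]`_k.
Definition blc (X : 'M[C]_2) : R := complex.Re (X 0 0 + X 1 1) / 2.

Lemma herm_decomp (X : 'M[C]_2) : Defs.hermitian X -> X = mkP (blc X) (blv X).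
Proof.
move=> hX.
have h00 : Num.conj (X 0 0) = X 0 0 by rewrite -{2}hX !mxE.
have h11 : Num.conj (X 1 1) = X 1 1 by rewrite -{2}hX !mxE.
have h10 : X 1 0 = Num.conj (X 0 1) by rewrite -{1}hX !mxE.
rewrite !conjE in h00 h11 h10.
apply/matrixP => i j; rewrite /blc /blv !mxE /=.
move: h00 h11.
elim/ord2P: i; elim/ord2P: j; rewrite /= ?h10;
case: (X 0 0) => a0 b0; case: (X 1 1) => a1 b1; case: (X 0 1) => a2 b2; rewrite /conjc /=; simpc;
move=> /eqP; rewrite eq_complex /= => /andP[_ /eqP e0] /eqP; rewrite eq_complex /= => /andP[_ /eqP e1];
apply/eqP; rewrite eq_complex /=; apply/andP; split; apply/eqP; lra.
Qed.

Lemma dotZl (a : R) (u v : 'cV[R]_3) : dot (a *: u) v = a * dot u v.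
Proof. rewrite !dotE !mxE; ring. Qed.
Lemma dotZr (a : R) (u v : 'cV[R]_3) : dot u (a *: v) = a * dot u v.
Proof. rewrite !dotE !mxE; ring. Qed.

Lemma tr_rhoP (s : 'cV[R]_3) b v : \tr (rho_of s *m mkP b v) = ((b + dot s v) +i* 0)%C.
Proof.
rewrite rhoE trP2 dotZl; apply/eqP; rewrite eq_complex /=; apply/andP; split; apply/eqP; by field.
Qed.

Lemma tr_drhoP (d : 'cV[R]_3) b v : \tr (2^-1 *: blochop d *m mkP b v) = ((dot d v) +i* 0)%C.
Proof.
rewrite drhoE trP2 dotZl; apply/eqP; rewrite eq_complex /=; apply/andP; split; apply/eqP; by field.
Qed.

Lemma tr_rhoPP (s : 'cV[R]_3) b v c w : \tr (rho_of s *m mkP b v *m mkP c w) =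
  ((b*c + c*dot s v + b*dot s w + dot v w) +i* (dot s (cross v w)))%C.
Proof.
rewrite rhoE trP3 !dotZl; apply/eqP; rewrite eq_complex /=; apply/andP; split; apply/eqP; by field.
Qed.
End B.
Arguments blv {R}.
Arguments blc {R}.


Section Cs.
Variable R : realType.
Local Notation C := R[i].

Lemma TrAbs_anti (W M : 'M[R]_2) : W 0 1 = W 1 0 -> 0 <= \det W ->
  M 0 0 = 0 -> M 1 1 = 0 -> M 0 1 = - M 1 0 ->
  TrAbs (W *m M) = 2 * Num.sqrt (\det W) * `|M 1 0|.
Proof.
move=> hW hD h00 h11 h01.
rewrite /TrAbs.
have ht : \tr (map_mx (@toC R) (W *m M)) = 0.
  rewrite /mxtrace sum2 !mxE !sum2 h00 h11 h01 hW /toC; simpc.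
  apply/eqP; rewrite eq_complex /=; apply/andP; split; apply/eqP; ring.
set D := \det W * M 1 0 ^+ 2.
have hD0 : 0 <= D by rewrite /D mulr_ge0 // sqr_ge0.
have hd : \det (map_mx (@toC R) (W *m M)) = (D +i* 0)%C.
  rewrite det2 !mxE !sum2 h00 h11 h01 /D det2 hW /toC; simpc.
  apply/eqP; rewrite eq_complex /=; apply/andP; split; apply/eqP; ring.
rewrite ht hd.
set r := sqrtC _.
have hr2 : r ^+ 2 = ((- (4 * D)) +i* 0)%C.
  rewrite /r sqrtCK expr0n /= sub0r.
  have -> : (4 : C) = ((4 : R)%:C)%C by rewrite rmorph_nat.
  by simpc.
have hnr : `|r| = (2 * Num.sqrt D)%:C%C.
  apply/eqP; rewrite -(@eqrXn2 _ 2) //; last by rewrite ler0c mulr_ge0 // sqrtr_ge0.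
  rewrite -normrX hr2 normc_def /= expr0n addr0 sqrtr_sqr normrN ger0_norm; last by rewrite mulr_ge0.
  rewrite -rmorphXn exprMn sqr_sqrtr //.
  apply/eqP; congr (_%:C)%C; ring.
have e1 : `|(0 + r) / 2| + `|(0 - r) / 2| = `|r| :> C.
  rewrite add0r sub0r mulNr normrN normrM -mulrDr.
  have h2 : `|2^-1 : C| + `|2^-1 : C| = 1.
    by rewrite ger0_norm ?invr_ge0 ?ler0n //; field.
  by rewrite h2 mulr1.
rewrite e1 hnr /= /D sqrtrM // sqrtr_sqr.
by rewrite mulrA.
Qed.

Definition Xof (s : 'cV[R]_3) (x : 'I_2 -> 'cV[R]_3) : 'I_2 -> 'M[C]_2 :=
  fun i => mkP (- dot s (x i)) (x i).

Definition fval (s : 'cV[R]_3) (W : 'M[R]_2) (x : 'I_2 -> 'cV[R]_3) : R :=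
  \sum_i \sum_k W i k * Qi s (x i) (x k)
  + 2 * Num.sqrt (\det W) * `|dot s (cross (x 0) (x 1))|.

Lemma trX (s : 'cV[R]_3) (x : 'I_2 -> 'cV[R]_3) (i k : 'I_2) :
  \tr (rho_of s *m Xof s x i *m Xof s x k) =
  (Qi s (x i) (x k) +i* dot s (cross (x i) (x k)))%C.
Proof.
rewrite /Xof tr_rhoPP; apply/eqP; rewrite eq_complex /=; apply/andP; split; apply/eqP => //.
rewrite /Qi; ring.
Qed.

Lemma ZXof (s : 'cV[R]_3) (x : 'I_2 -> 'cV[R]_3) (i k : 'I_2) : Zmat (rho_of s) (Xof s x) k i =
  (Qi s (x i) (x k) +i* dot s (cross (x i) (x k)))%C.
Proof.
rewrite mxE /Xof tr_rhoPP; apply/eqP; rewrite eq_complex /=; apply/andP; split; apply/eqP => //.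
rewrite /Qi; ring.
Qed.

Lemma holevo_val (s : 'cV[R]_3) (W : 'M[R]_2) (x : 'I_2 -> 'cV[R]_3) : W 0 1 = W 1 0 -> 0 <= \det W ->
  holevo_fun W (rho_of s) (Xof s x) = fval s W x.
Proof.
move=> hW hD; rewrite /holevo_fun /fval; congr (_ + _).
  rewrite /mxtrace; apply: eq_bigr => i _; rewrite mxE; apply: eq_bigr => k _.
  by rewrite /ReM mxE ZXof.
rewrite TrAbs_anti // /ImM ?mxE ?trX //=.
- rewrite !dotE !crossE; ring.
- rewrite !dotE !crossE; ring.
- rewrite !dotE !crossE; ring.
Qed.
End Cs.
Arguments Xof {R}.
Arguments fval {R}.


Section Ds.
Variable R : realType.
Local Notation C := R[i].

Lemma natC (b : bool) : (b%:R : C) = ((b%:R : R) +i* 0)%C.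
Proof. by case: b. Qed.

Lemma feas_Xof (s : 'cV[R]_3) (d : 'I_2 -> 'cV[R]_3) (x : 'I_2 -> 'cV[R]_3) :
  (forall i j, dot (d i) (x j) = (i == j)%:R) ->
  holevo_feasible (rho_of s) (fun i => 2^-1 *: blochop (d i)) (Xof s x).
Proof.
move=> hx; split; [|split].
- by move=> i; apply: herm_mkP.
- move=> i; rewrite /Xof tr_rhoP addNr; by [].
- move=> i j; rewrite /Xof tr_drhoP hx natC; by [].
Qed.

Lemma feas_inv (s : 'cV[R]_3) (d : 'I_2 -> 'cV[R]_3) (X : 'I_2 -> 'M[C]_2) :
  holevo_feasible (rho_of s) (fun i => 2^-1 *: blochop (d i)) X ->
  exists x : 'I_2 -> 'cV[R]_3, (forall i j, dot (d i) (x j) = (i == j)%:R) /\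
     forall i, X i = Xof s x i.
Proof.
move=> [hH [hr hd]].
have hc : forall i, blc (X i) = - dot s (blv (X i)).
  move=> i; have e := herm_decomp (hH i); have := hr i; rewrite {1}e tr_rhoP.
  move=> /eqP; rewrite eq_complex /= => /andP[/eqP h _]; lra.
exists (fun i => blv (X i)); split.
- move=> i j; have e := herm_decomp (hH j); have := hd i j; rewrite {1}e tr_drhoP natC.
  by move=> /eqP; rewrite eq_complex /= => /andP[/eqP h _].
- by move=> i; rewrite /Xof -hc; apply: herm_decomp.
Qed.
End Ds.


Section Es.
Variable R : realType.
Variables (s : 'cV[R]_3) (d : 'I_2 -> 'cV[R]_3).
Hypothesis hs : dot s s < 1.
Hypothesis hG : Gmat s d \in unitmx.
Local Notation G := (Gmat s d).
Local Notation Gi := (invmx (Gmat s d)).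
Local Notation L := (ell_lo s d).
Local Notation Lu := (ell_up s d).
Local Notation Lp := (ell_perp d).

Lemma dotlin (a u v : 'cV[R]_3) p q : dot a (p *: u + q *: v) = p * dot a u + q * dot a v.
Proof. rewrite !dotE !mxE; ring. Qed.
Lemma Qilin (a u v : 'cV[R]_3) p q : Qi s a (p *: u + q *: v) = p * Qi s a u + q * Qi s a v.
Proof. rewrite /Qi !dotlin; ring. Qed.
Lemma triplin (a u v : 'cV[R]_3) p q :
  dot s (cross a (p *: u + q *: v)) = p * dot s (cross a u) + q * dot s (cross a v).
Proof. rewrite !dotE !crossE !mxE; ring. Qed.

Lemma GmatE j k : G j k = dot (d j) (L k). Proof. by rewrite mxE. Qed.

Lemma Gsum j i : G j 0 * Gi 0 i + G j 1 * Gi 1 i = (j == i)%:R.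
Proof.
have := congr1 (fun M : 'M[R]_2 => M j i) (mulmxV hG); rewrite mxE sum2 => ->.
by rewrite mxE.
Qed.

Lemma ell_upE i : Lu i = Gi 0 i *: L 0 + Gi 1 i *: L 1.
Proof. by rewrite /ell_up sum2. Qed.

Lemma F1 j i : dot (d j) (Lu i) = (j == i)%:R.
Proof. by rewrite ell_upE dotlin -!GmatE -Gsum [Gi 0 i * _]mulrC [Gi 1 i * _]mulrC. Qed.

Lemma F2 i j : Qi s (Lu i) (Lu j) = Gi i j.
Proof.
rewrite [Lu j]ell_upE Qilin /ell_lo !QiQ // ![dot (Lu i) _]dotC !F1.
by elim/ord2P: i; rewrite /= ?mulr1 ?mulr0 ?addr0 ?add0r.
Qed.

Lemma F3 i : Qi s (Lu i) Lp = 0.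
Proof.
rewrite QiC ell_upE Qilin /ell_lo !QiQ //.
have h : forall k, dot Lp (d k) = 0 by elim/ord2P; rewrite /ell_perp !dotE !crossE; ring.
by rewrite !h !mulr0 addr0.
Qed.

Lemma F4 j : dot s (cross Lp (Lu j)) =
  dot s (d 1) * (0 == j)%:R - dot s (d 0) * (1 == j)%:R.
Proof.
have h : forall k, dot s (cross Lp (L k)) = dot s (d 1) * G 0 k - dot s (d 0) * G 1 k.
  move=> k; rewrite !GmatE /ell_lo /ell_perp !dotE !crossE !QmulE !dotE; ring.
rewrite ell_upE triplin !h -!Gsum; ring.
Qed.

End Es.


Section Fs.
Variable R : realType.

Lemma perp_decomp (a b y : 'cV[R]_3) : dot a y = 0 -> dot b y = 0 ->
  dot (cross a b) (cross a b) != 0 ->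
  y = (dot (cross a b) y / dot (cross a b) (cross a b)) *: cross a b.
Proof.
set c := cross a b => ha hb hc.
have key : forall k, dot c c * y k 0 - dot c y * c k 0 =
   - (cross c (dot a y *: b - dot b y *: a)) k 0.
  by elim/ord3P; rewrite /c !dotE !crossE !mxE; ring.
have gen : forall k, y k 0 = (dot c y / dot c c) * c k 0.
  have z : forall k, (cross c 0) k 0 = 0 by elim/ord3P; rewrite crossE !mxE; ring.
  move=> k; have e := key k.
  rewrite ha hb !scale0r subrr z oppr0 in e.
  have e' : dot c y * c k 0 = dot c c * y k 0 by apply/eqP; rewrite eq_sym -subr_eq0 e.
  by rewrite mulrAC e' mulrAC mulfV // mul1r.
by apply: vecP; rewrite mxE gen.
Qed.

Variables (s : 'cV[R]_3) (d : 'I_2 -> 'cV[R]_3) (W : 'M[R]_2).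
Hypothesis hs : dot s s < 1.
Hypothesis hG : Gmat s d \in unitmx.
Hypothesis hW : W 0 1 = W 1 0.
Local Notation Gi := (invmx (Gmat s d)).
Local Notation L := (ell_lo s d).
Local Notation Lu := (ell_up s d).
Local Notation Lp := (ell_perp d).

Definition xv (xi : 'cV[R]_2) : 'I_2 -> 'cV[R]_3 := fun i => Lu i + xi i 0 *: Lp.

Lemma Gisym i k : Gi i k = Gi k i.
Proof. by rewrite -!F2 // QiC. Qed.

Lemma key_val xi : fval s W (xv xi) = hfun s d W xi.
Proof.
have bil : forall u v w a b, Qi s (u + a *: w) (v + b *: w) =
    Qi s u v + b * Qi s u w + a * Qi s v w + a * b * Qi s w w.
  by move=> u v w a b; rewrite /Qi !dotE !mxE; ring.
have tri : forall u v w a b, dot s (cross (u + a *: w) (v + b *: w)) =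
    dot s (cross u v) - b * dot s (cross w u) + a * dot s (cross w v).
  by move=> u v w a b; rewrite !dotE !crossE !mxE; ring.
rewrite /fval /hfun /xv; congr (_ + _ * _).
  rewrite !sum2 !bil !F2 // !F3 // /mxtrace !sum2 !mxE !sum2 !mxE !sum2 !mxE.
  rewrite Qi_invQ // hW (Gisym 1 0); ring.
rewrite tri !F4 //= -normrN; congr `|_|.
have e1 : dot (Lu 0) (Fop s (Lu 1)) = - dot s (cross (Lu 0) (Lu 1)).
  by rewrite /Fop !dotE !crossE; ring.
have e2 : forall k, (1 - bnorm s ^+ 2) * dot s (L k) = dot s (d k).
  move=> k; rewrite bnorm2 /ell_lo !dotE !QmulE !dotE.
  have h1 : 1 - dot s s != 0 by rewrite subr_eq0 eq_sym lt_eqF.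
  move: h1; rewrite dotE => h1; field; exact: h1.
rewrite e1 mxE sum2 !mxE; have h0 := e2 0; have h1 := e2 1.
move: (1 - bnorm s ^+ 2) h0 h1 => b h0 h1; rewrite -h0 -h1; ring.
Qed.

End Fs.


Section Gs.
Variable R : realType.
Local Notation C := R[i].

Lemma vec0 (a : 'cV[R]_3) : dot a a = 0 -> a = 0.
Proof.
rewrite dotE => h.
have h0 : a 0 0 = 0 by nra.
have h1 : a 1 0 = 0 by nra.
have h2 : a 2 0 = 0 by nra.
by apply: vecP; rewrite mxE.
Qed.

Lemma comb0 (u v : 'cV[R]_3) a b : a *: u + b *: v = 0 ->
  toC a *: (2^-1 *: blochop u) + toC b *: (2^-1 *: blochop v) = 0.
Proof.
move=> h.
have hk : forall k, a * u k 0 + b * v k 0 = 0.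
  by move=> k; have := congr1 (fun M : 'cV[R]_3 => M k 0) h; rewrite !mxE.
have h0 := hk 0; have h1 := hk 1; have h2 := hk 2.
rewrite !drhoE; apply/matrixP => i j; rewrite !mxE /toC.
elim/ord2P: i; elim/ord2P: j; rewrite /=; simpc; rewrite zeroC;
  apply/eqP; rewrite eq_complex /=; apply/andP; split; apply/eqP; lra.
Qed.

Lemma lind (u v : 'cV[R]_3) : (forall a b, a *: u + b *: v = 0 -> a = 0 /\ b = 0) ->
  dot (cross u v) (cross u v) != 0.
Proof.
move=> hi; apply/negP => /eqP /vec0 hc.
have [hu|hu] := eqVneq (dot u u) 0.
  have := hi 1 0; rewrite (vec0 hu) scaler0 scale0r addr0 => /(_ erefl) [] /eqP.
  by rewrite oner_eq0.
have id : forall k, ((- dot u v) *: u + dot u u *: v) k 0 = - (cross u (cross u v)) k 0.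
  by elim/ord3P; rewrite !crossE !mxE !dotE; ring.
have id0 : (- dot u v) *: u + dot u u *: v = 0.
  by apply: vecP; rewrite !id hc !mxE /=; ring.
have [_ hb] := hi _ _ id0.
by move: hu; rewrite hb eqxx.
Qed.

Lemma Gunit (s : 'cV[R]_3) (d : 'I_2 -> 'cV[R]_3) : dot s s < 1 ->
  dot (ell_perp d) (ell_perp d) != 0 -> Gmat s d \in unitmx.
Proof.
move=> hs hp.
rewrite unitmxE unitfE det2 !GmatE /ell_lo !dotE !QmulE !dotE.
set al := (1 - _)^-1.
have hal : 0 < al by rewrite /al invr_gt0 subr_gt0 -dotE.
set w := (dot s (d 0)) *: d 1 - (dot s (d 1)) *: d 0.
have e : forall x, x = dot (ell_perp d) (ell_perp d) + al * dot w w -> x != 0.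
  move=> x ->; rewrite gt_eqF // ltr_pwDl ?mulr_ge0 ?dot_ge0 ?ltW //.
  by rewrite lt_def hp dot_ge0.
apply: e; rewrite /w /ell_perp !dotE !crossE !mxE ?dotE; ring.
Qed.

Lemma Qpp_gt0 (s a : 'cV[R]_3) : dot s s < 1 -> dot a a != 0 -> 0 < Qi s a a.
Proof.
move=> hs ha.
have h1 : 0 < dot a a by rewrite lt_def ha dot_ge0.
have cs : dot s a ^+ 2 <= dot s s * dot a a.
  rewrite -subr_ge0 (_ : _ - _ = dot (cross s a) (cross s a)) ?dot_ge0 //.
  rewrite !dotE !crossE; ring.
rewrite /Qi; nra.
Qed.

End Gs.


Section Hs.
Variable R : realType.

Lemma absP (x : R) : (0 <= x /\ `|x| = x) \/ (x < 0 /\ `|x| = - x).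
Proof.
case: (lerP 0 x) => h; [left; split=> //; exact: ger0_norm | right; split=> //; exact: ltr0_norm].
Qed.

Lemma min1 (A k B : R) : 0 < A -> 0 <= k ->
  exists u, forall t, A * u ^+ 2 + k * `|B + u| <= A * t ^+ 2 + k * `|B + t|.
Proof.
move=> hA hk.
set h := k / (2 * A).
have hh : 2 * A * h = k by rewrite /h mulrCA mulfV ?mulr1 // mulf_neq0 // gt_eqF.
have h0 : 0 <= h by rewrite /h divr_ge0 // mulr_ge0 // ltW.
case: (lerP k (2 * A * B)) => c1.
  exists (- h) => t.
  have hb : 0 <= B - h by rewrite -hh in c1; nra.
  rewrite ger0_norm //.
  have sq : 0 <= A * (t + h) ^+ 2 by rewrite mulr_ge0 ?sqr_ge0 // ltW.
  have [[ht ->]|[ht ->]] := absP (B + t).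
  - rewrite -hh; nra.
  - have : k * (B + t) <= 0 by rewrite mulr_ge0_le0 // ltW.
    rewrite -hh; nra.
case: (lerP (2 * A * B) (- k)) => c2.
  exists h => t.
  have hb : B + h <= 0 by rewrite -hh in c2; nra.
  rewrite ler0_norm //.
  have sq : 0 <= A * (t - h) ^+ 2 by rewrite mulr_ge0 ?sqr_ge0 // ltW.
  have [[ht ->]|[ht ->]] := absP (B + t).
  - have : 0 <= k * (B + t) by rewrite mulr_ge0.
    rewrite -hh; nra.
  - rewrite -hh; nra.
exists (- B) => t; rewrite subrr normr0 mulr0 addr0.
have [[ht ->]|[ht ->]] := absP (B + t).
- have : 0 <= A * (t + B) + (k - 2 * A * B) by nra.
  nra.
- have : A * (t + B) - (k + 2 * A * B) <= 0 by nra.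
  nra.
Qed.

Definition q2 (w0 w1 w2 x0 x1 : R) := w0 * x0 ^+ 2 + 2 * w1 * x0 * x1 + w2 * x1 ^+ 2.

Lemma q2_ge0 w0 w1 w2 x0 x1 : 0 < w0 -> 0 < w0 * w2 - w1 ^+ 2 -> 0 <= q2 w0 w1 w2 x0 x1.
Proof.
move=> h0 hD.
have e : w0 * q2 w0 w1 w2 x0 x1 = (w0 * x0 + w1 * x1) ^+ 2 + (w0 * w2 - w1 ^+ 2) * x1 ^+ 2
  by rewrite /q2; ring.
have : 0 <= w0 * q2 w0 w1 w2 x0 x1 by rewrite e; apply: addr_ge0; [exact: sqr_ge0 | apply: mulr_ge0; [exact: ltW | exact: sqr_ge0]].
by rewrite pmulr_rge0.
Qed.

Lemma min2 (w0 w1 w2 a k B v0 v1 : R) : 0 < w0 -> 0 < w0 * w2 - w1 ^+ 2 -> 0 < a -> 0 <= k ->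
  exists z0 z1, forall x0 x1,
    a * q2 w0 w1 w2 z0 z1 + k * `|B + v0 * z0 + v1 * z1|
    <= a * q2 w0 w1 w2 x0 x1 + k * `|B + v0 * x0 + v1 * x1|.
Proof.
move=> h0 hD ha hk.
set D := w0 * w2 - w1 ^+ 2 in hD *.
have [hv|hv] := boolP ((v0 == 0) && (v1 == 0)).
  case/andP: hv => /eqP -> /eqP ->.
  exists 0, 0 => x0 x1; rewrite !mul0r !addr0.
  have hq0 : q2 w0 w1 w2 0 0 = 0 by rewrite /q2; ring.
  rewrite hq0 mulr0 add0r lerDr; apply: mulr_ge0; [exact: ltW | exact: q2_ge0].
set m := w2 * v0 ^+ 2 - 2 * w1 * v0 * v1 + w0 * v1 ^+ 2.
have hm : 0 < m.
  have e : w0 * m = (w0 * v1 - w1 * v0) ^+ 2 + D * v0 ^+ 2 by rewrite /m /D; ring.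
  have : 0 < w0 * m.
    rewrite e; case: (eqVneq v0 0) => [e0|n0].
      move: hv; rewrite e0 eqxx /= => hv.
      rewrite (_ : _ + _ = w0 ^+ 2 * v1 ^+ 2); last by ring.
      apply: mulr_gt0; first exact: exprn_gt0.
      by rewrite lt_def sqrf_eq0 hv sqr_ge0.
    by rewrite ltr_pwDr ?sqr_ge0 // mulr_gt0 // lt_def sqrf_eq0 n0 sqr_ge0.
  by rewrite pmulr_rgt0.
have hA : 0 < a * D / m by rewrite divr_gt0 // mulr_gt0.
have [u hu] := min1 B hA hk.
set p0 := w2 * v0 - w1 * v1.
set p1 := w0 * v1 - w1 * v0.
exists (u / m * p0), (u / m * p1) => x0 x1.
have e1 : v0 * (u / m * p0) + v1 * (u / m * p1) = u.
  rewrite /p0 /p1; move: (hm); rewrite lt_def => /andP[hm0 _]; rewrite /m in hm0 *; field; exact: hm0.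
have e2 : a * q2 w0 w1 w2 (u / m * p0) (u / m * p1) = a * D / m * u ^+ 2.
  rewrite /q2 /p0 /p1 /D; move: (hm); rewrite lt_def => /andP[hm0 _]; rewrite /m in hm0 *; field; exact: hm0.
rewrite -addrA e1 e2.
apply: le_trans (hu (v0 * x0 + v1 * x1)) _.
rewrite addrA lerD2r.
have cs : D * (v0 * x0 + v1 * x1) ^+ 2 <= m * q2 w0 w1 w2 x0 x1.
  rewrite -subr_ge0 (_ : _ - _ = (v0 * (w1 * x0 + w2 * x1) - v1 * (w0 * x0 + w1 * x1)) ^+ 2) ?sqr_ge0 //.
  rewrite /m /D /q2; ring.
rewrite -subr_ge0.
move: (hm); rewrite lt_def => /andP[hm0 _].
rewrite (_ : _ - _ = a / m * (m * q2 w0 w1 w2 x0 x1 - D * (v0 * x0 + v1 * x1) ^+ 2)); last first.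
  by field.
by apply: mulr_ge0; [rewrite divr_ge0 // ltW | rewrite subr_ge0].
Qed.

End Hs.

Local Open Scope classical_set_scope.
Local Open Scope ring_scope.


Section Fin.
Variable R : realType.

Lemma dotlin1 (a u w : 'cV[R]_3) c : dot a (u + c *: w) = dot a u + c * dot a w.
Proof. rewrite !dotE !mxE; ring. Qed.

Lemma feas_xv (s : 'cV[R]_3) (d : 'I_2 -> 'cV[R]_3) (xi : 'cV[R]_2) :
  Gmat s d \in unitmx -> forall i j, dot (d i) (xv s d xi j) = (i == j)%:R.
Proof.
move=> hG i j; rewrite /xv dotlin1 F1 //.
have -> : dot (d i) (ell_perp d) = 0.
  by elim/ord2P: i; rewrite /ell_perp !dotE !crossE; ring.
by rewrite mulr0 addr0.
Qed.

Lemma decomp_x (s : 'cV[R]_3) (d : 'I_2 -> 'cV[R]_3) (x : 'I_2 -> 'cV[R]_3) :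
  Gmat s d \in unitmx -> dot (ell_perp d) (ell_perp d) != 0 ->
  (forall i j, dot (d i) (x j) = (i == j)%:R) ->
  exists xi, forall j, x j = xv s d xi j.
Proof.
move=> hG hp hx.
pose t j := dot (ell_perp d) (x j - ell_up s d j) / dot (ell_perp d) (ell_perp d).
exists (\col_j t j) => j.
have h : forall i, dot (d i) (x j - ell_up s d j) = 0.
  move=> i; rewrite (_ : x j - _ = x j + (-1) *: ell_up s d j); last by rewrite scaleN1r.
  by rewrite dotlin1 hx F1 // mulN1r subrr.
have := perp_decomp (h 0) (h 1) hp.
rewrite /xv mxE => <-.
by rewrite addrC subrK.
Qed.

Lemma posdef_facts (W : 'M[R]_2) : posdef W ->
  [/\ W 0 1 = W 1 0, 0 < W 0 0 & 0 < W 0 0 * W 1 1 - W 0 1 ^+ 2].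
Proof.
move=> [hT hp].
have hW : W 0 1 = W 1 0 by rewrite -{1}hT mxE.
have qf : forall x : 'cV[R]_2, (x^T *m W *m x) 0 0 =
    x 0 0 ^+ 2 * W 0 0 + 2 * x 0 0 * x 1 0 * W 0 1 + x 1 0 ^+ 2 * W 1 1.
  by move=> x; rewrite !mxE !sum2 !mxE !sum2 !mxE hW; ring.
pose e0 : 'cV[R]_2 := \col_i (i == 0)%:R.
have ne0 : e0 != 0 by apply/eqP => /matrixP /(_ 0 0); rewrite !mxE /= => /eqP; rewrite oner_eq0.
have h0 := hp _ ne0; rewrite qf !mxE /= in h0.
have h00 : 0 < W 0 0 by move: h0; rewrite expr1n expr0n /=; lra.
split => //.
pose e1 : 'cV[R]_2 := \col_i (if i == 0 then - W 0 1 else W 0 0).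
have ne1 : e1 != 0.
  apply/eqP => /matrixP /(_ 1 0); rewrite !mxE /= => /eqP; by rewrite gt_eqF.
have h1 := hp _ ne1; rewrite qf !mxE /= in h1.
have : 0 < W 0 0 * (W 0 0 * W 1 1 - W 0 1 ^+ 2) by lra.
by rewrite pmulr_rgt0.
Qed.


Lemma hfun_form (s : 'cV[R]_3) (d : 'I_2 -> 'cV[R]_3) (W : 'M[R]_2) (xi : 'cV[R]_2) :
  W 0 1 = W 1 0 ->
  hfun s d W xi = \tr (W *m invmx (Gmat s d))
    + dot (ell_perp d) (invmx (Qmat s) *m ell_perp d) * q2 (W 0 0) (W 0 1) (W 1 1) (xi 0 0) (xi 1 0)
    + 2 * Num.sqrt (\det W) * `|dot (ell_up s d 0) (Fop s (ell_up s d 1))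
        + (1 - bnorm s ^+ 2) * gammav s d 0 0 * xi 0 0
        + (1 - bnorm s ^+ 2) * gammav s d 1 0 * xi 1 0|.
Proof.
move=> hW; rewrite /hfun /q2; congr (_ + _ + _).
  congr (_ * _); by rewrite !mxE !sum2 !mxE !sum2 !mxE hW; ring.
congr (_ * _); congr (`|_|); by rewrite mxE sum2 !mxE; ring.
Qed.
End Fin.

Theorem lemma2 (R : realType) (Theta : set 'rV[R]_2)
  (s : 'rV[R]_2 -> 'cV[R]_3) (W : 'M[R]_2) :
  open Theta ->
  (forall th, Theta th -> differentiable s th) ->
  (forall th, Theta th -> bnorm (s th) < 1) ->
  (forall th, Theta th -> forall a b : R,
      toC a *: drho s th 0 + toC b *: drho s th 1 = 0 -> a = 0 /\ b = 0) ->
  posdef W ->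
  forall th, Theta th ->
  exists m : R,
    is_min [set y | exists X : 'I_2 -> 'M[R[i]]_2,
                      holevo_feasible (rho_of (s th)) (drho s th) X /\
                      y = holevo_fun W (rho_of (s th)) X] m /\
    is_min [set y | exists xi : 'cV[R]_2,
                      y = hfun (s th) (dS s th) W xi] m.
Proof.
move=> _ _ hnorm hind hWp th hth.
set s0 := s th; set d := dS s th.
have hs : dot s0 s0 < 1.
  have b0 : 0 <= bnorm s0 := sqrtr_ge0 _.
  have := hnorm th hth; rewrite -/s0 -bnorm2 => h; nra.
have hind' : forall a b, a *: d 0 + b *: d 1 = 0 -> a = 0 /\ b = 0.
  by move=> a b h; apply: (hind th hth); exact: comb0 h.
have hp : dot (ell_perp d) (ell_perp d) != 0 := lind hind'.
have hG := Gunit hs hp.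
have [hW hw0 hD] := posdef_facts hWp.
have hdet : \det W = W 0 0 * W 1 1 - W 0 1 ^+ 2 by rewrite det2 hW expr2.
have hc : 0 < dot (ell_perp d) (invmx (Qmat s0) *m ell_perp d).
  by rewrite Qi_invQ // Qpp_gt0.
have hdet0 : 0 <= \det W by rewrite hdet ltW.
have hK : 0 <= 2 * Num.sqrt (\det W) by rewrite mulr_ge0 // sqrtr_ge0.
have [z0 [z1 hz]] := min2 (dot (ell_up s0 d 0) (Fop s0 (ell_up s0 d 1)))
   ((1 - bnorm s0 ^+ 2) * gammav s0 d 0 0) ((1 - bnorm s0 ^+ 2) * gammav s0 d 1 0) hw0 hD hc hK.
pose xs : 'cV[R]_2 := \col_i [:: z0; z1]`_i.
have hmin : forall xi, hfun s0 d W xs <= hfun s0 d W xi.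
  have e0 : xs 0 0 = z0 by rewrite mxE.
  have e1 : xs 1 0 = z1 by rewrite mxE.
  move=> xi; rewrite !hfun_form // e0 e1; have := hz (xi 0 0) (xi 1 0); lra.
exists (hfun s0 d W xs); split; last first.
  by split; [exists xs | move=> y [xi ->]; apply: hmin].
split.
  exists (Xof s0 (xv s0 d xs)); split.
    exact: feas_Xof (feas_xv xs hG).
  by rewrite holevo_val // key_val.
move=> y [X [hX ->]].
have [x [hx hXx]] := feas_inv hX.
have -> : X = Xof s0 x by apply: funext.
rewrite holevo_val //.
have [xi hxi] := decomp_x hG hp hx.
have -> : x = xv s0 d xi by apply: funext.
by rewrite key_val.
Qed.
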